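(* Let $a\in\mathbb{R}$, $\lambda\in[0,1)$, and let $f=h+\overline{g}$ with $h(z)=z+\sum_{n\ge2}a_nz^n$, $g(z)=\sum_{n\ge1}b_nz^n$ analytic in $\mathbb{D}$, satisfying $h-g=k_a$ and $g'/h'=\lambda z$ in $\mathbb{D}$. Then $$|a_2|\le |a|+\frac{\lambda}{2},\qquad |a_3|\le\frac13\left(\lambda^2+2|a|\lambda+2a^2+1\right),$$ $$|a_4|\le \frac13|a|^3+\frac23|a|+\frac14\lambda\left(\lambda^2+2|a|\lambda+2a^2+1\right),$$ $$|b_3|\le\frac13\lambda^2+\frac23|a|\lambda,\qquad |b_4|\le\frac14\lambda\left(\lambda^2+2|a|\lambda+2a^2+1\right).$$ All of these inequalities are sharp.
   Context: $\mathbb{D}$ is the open unit disk. For $a\neq0$, $k_a(z)=\frac{1}{2a}\left[\left(\frac{1+z}{1-z}\right)^a-1\right]$ (principal branch), and $k_0(z)=\frac12\log\frac{1+z}{1-z}$. *)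

(* Defs.v *)
From Stdlib Require Import Reals.
From Coquelicot Require Export Coquelicot.
Open Scope R_scope.

Definition Cexp (z : C) : C :=
  (exp (Re z) * cos (Im z), exp (Re z) * sin (Im z)).

(* principal argument, with values in (-PI, PI] *)
Definition Carg (w : C) : R :=
  if Rlt_dec 0 (Re w) then atan (Im w / Re w)
  else if Rlt_dec (Re w) 0 then
    (if Rle_dec 0 (Im w) then atan (Im w / Re w) + PI
     else atan (Im w / Re w) - PI)
  else if Rlt_dec 0 (Im w) then PI / 2
  else if Rlt_dec (Im w) 0 then - (PI / 2)
  else 0.

Definition Clog (w : C) : C := (ln (Cmod w), Carg w).

Definition Cpowr (w : C) (a : R) : C := Cexp (Cmult (RtoC a) (Clog w)).

Definition k_fun (a : R) (z : C) : C :=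
  let w := Cdiv (Cplus (RtoC 1) z) (Cminus (RtoC 1) z) in
  if Req_EM_T a 0 then Cmult (RtoC (1/2)) (Clog w)
  else Cmult (Cinv (RtoC (2 * a))) (Cminus (Cpowr w a) (RtoC 1)).

(* f = h + conj g with h(z) = sum a_n z^n (a_0 = 0, a_1 = 1),
   g(z) = sum b_n z^n (b_0 = 0), both convergent (hence analytic) in D,
   h - g = k_a and g'/h' = lambda z in D. *)
Definition in_class (a lam : R) (h g : C -> C) (ca cb : nat -> C) : Prop :=
  ca 0%nat = RtoC 0 /\ ca 1%nat = RtoC 1 /\ cb 0%nat = RtoC 0 /\
  (forall z : C, Cmod z < 1 ->
     @is_series C_AbsRing C_NormedModule (fun n => Cmult (ca n) (Cpow z n)) (h z) /\
     @is_series C_AbsRing C_NormedModule (fun n => Cmult (cb n) (Cpow z n)) (g z) /\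
     Cminus (h z) (g z) = k_fun a z /\
     exists dh dg : C,
       @is_derive C_AbsRing C_NormedModule h z dh /\
       @is_derive C_AbsRing C_NormedModule g z dg /\
       dh <> RtoC 0 /\ Cdiv dg dh = Cmult (RtoC lam) z).

Definition Q (a lam : R) : R := lam ^ 2 + 2 * Rabs a * lam + 2 * a ^ 2 + 1.

(* Main.v *)
Require Import Defs.
From Stdlib Require Import Reals.
From Coquelicot Require Import Coquelicot.
From Stdlib Require Import Lra Lia.
Open Scope R_scope.

Lemma C_ext (z w : C) : fst z = fst w -> snd z = snd w -> z = w.
Proof. destruct z, w; simpl; intros; subst; reflexivity. Qed.

Lemma sum_n_fst (a : nat -> C) n :
  fst (@sum_n C_AbelianMonoid a n) = sum_n (fun k => fst (a k)) n.
Proof.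
  induction n. now rewrite !sum_O.
  rewrite !sum_Sn. simpl. rewrite <- IHn. reflexivity.
Qed.
Lemma sum_n_snd (a : nat -> C) n :
  snd (@sum_n C_AbelianMonoid a n) = sum_n (fun k => snd (a k)) n.
Proof.
  induction n. now rewrite !sum_O.
  rewrite !sum_Sn. simpl. rewrite <- IHn. reflexivity.
Qed.

Lemma is_series_C (a : nat -> C) (l : C) :
  @is_series C_AbsRing C_NormedModule a l <->
  is_series (fun n => fst (a n)) (fst l) /\ is_series (fun n => snd (a n)) (snd l).
Proof.
  unfold is_series. split.
  - intros H; split; apply filterlim_locally; intros eps;
    generalize (proj1 (filterlim_locally _ _) H eps);
    apply filter_imp; intros n [H1 H2];
    [rewrite <- sum_n_fst | rewrite <- sum_n_snd]; assumption.
  - intros [H1 H2]. apply filterlim_locally. intros eps.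
    generalize (proj1 (filterlim_locally _ _) H1 eps).
    generalize (proj1 (filterlim_locally _ _) H2 eps). intros Hb Ha.
    generalize (filter_and _ _ Ha Hb). apply filter_imp. intros n [Ha' Hb'].
    split; [rewrite sum_n_fst | rewrite sum_n_snd]; assumption.
Qed.

Definition good (c : nat -> C) :=
  forall r, 0 <= r < 1 -> exists M, forall n, Cmod (c n) * r ^ n <= M.

Definition PSC (c : nat -> C) (z : C) : C :=
  (Series (fun n => fst (Cmult (c n) (Cpow z n))),
   Series (fun n => snd (Cmult (c n) (Cpow z n)))).

Lemma im_le_Cmod (c : C) : Rabs (snd c) <= Cmod c.
Proof. eapply Rle_trans; [|apply Rmax_Cmod]. apply Rmax_r. Qed.

Lemma good_between c r : good c -> 0 <= r < 1 ->
  exists M q, 0 <= M /\ 0 <= q < 1 /\ forall n, Cmod (c n) * r ^ n <= M * q ^ n.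
Proof.
  intros Hg Hr. set (r1 := (1 + r) / 2).
  destruct (Hg r1) as [M HM]. unfold r1; lra.
  exists (Rmax M 0), (r / r1). split. apply Rmax_r. split.
  split. apply Rmult_le_pos. lra. left; apply Rinv_0_lt_compat; unfold r1; lra.
  apply Rmult_lt_reg_r with r1. unfold r1; lra. unfold Rdiv.
  rewrite Rmult_assoc, Rinv_l. unfold r1; lra. unfold r1; lra.
  intros n. unfold Rdiv. rewrite Rpow_mult_distr, <- Rmult_assoc.
  replace (Cmod (c n) * r ^ n) with (Cmod (c n) * r1 ^ n * (/ r1) ^ n * r ^ n).
  2:{ assert (E1 : r1 ^ n * (/ r1) ^ n = 1).
       { rewrite <- Rpow_mult_distr, Rinv_r, pow1. auto. unfold r1; lra. }
       transitivity (Cmod (c n) * (r1 ^ n * (/ r1) ^ n) * r ^ n). ring. rewrite E1; ring. }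
  replace (Rmax M 0 * r ^ n * (/ r1) ^ n) with (Rmax M 0 * (/ r1) ^ n * r ^ n) by ring.
  apply Rmult_le_compat_r. apply pow_le. lra.
  apply Rmult_le_compat_r. apply pow_le. left; apply Rinv_0_lt_compat; unfold r1; lra.
  eapply Rle_trans. apply HM. apply Rmax_l.
Qed.

Lemma good_summ c r : good c -> 0 <= r < 1 ->
  ex_series (fun n => Cmod (c n) * r ^ n).
Proof.
  intros Hg Hr. destruct (good_between c r Hg Hr) as [M [q [HM [Hq H]]]].
  apply (@ex_series_le R_AbsRing R_CompleteNormedModule _ (fun n => M * q ^ n)).
  intros n. change (norm (Cmod (c n) * r ^ n)) with (Rabs (Cmod (c n) * r ^ n)).
  rewrite Rabs_pos_eq. apply H. apply Rmult_le_pos. apply Cmod_ge_0. apply pow_le; lra.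
  exact (@ex_series_scal_l R_AbsRing R_NormedModule M _ (ex_series_geom q ltac:(rewrite Rabs_pos_eq; lra))).
Qed.

Lemma bern q : 0 <= q < 1 -> exists K, forall n, INR (S n) * q ^ n <= K.
Proof.
  intros Hq. destruct (Req_dec q 0) as [E|E].
  - exists 1. intros [|n]. simpl; lra. subst. rewrite pow_i by lia. lra.
  - set (t := / q - 1). assert (Ht : 0 < t).
    { unfold t. assert (1 < / q). { rewrite <- Rinv_1. apply Rinv_lt_contravar; lra. } lra. }
    assert (HB : forall n, 1 + INR n * t <= (1 + t) ^ n).
    { induction n. simpl; lra. rewrite S_INR. simpl.
      assert (0 <= INR n) by apply pos_INR. nra. }
    assert (Hqt : q * (1 + t) = 1). { unfold t. field. auto. }
    exists (1 + / t). intros n.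
    assert (Hp : q ^ n * (1 + t) ^ n = 1). { rewrite <- Rpow_mult_distr, Hqt. apply pow1. }
    assert (Hpos : 0 < (1 + t) ^ n). { apply pow_lt. lra. }
    assert (q ^ n = / (1 + t) ^ n). { apply (Rmult_eq_reg_r ((1+t)^n)); [rewrite Hp, Rinv_l; lra | lra]. }
    rewrite H. rewrite S_INR. specialize (HB n).
    assert (0 <= INR n) by apply pos_INR.
    apply Rmult_le_reg_r with ((1 + t) ^ n). auto.
    rewrite Rmult_assoc, Rinv_l by lra.
    apply Rle_trans with ((1 + / t) * (1 + INR n * t)).
    2:{ apply Rmult_le_compat_l. assert (0 < / t) by (apply Rinv_0_lt_compat; auto). lra. auto. }
    assert (/ t * t = 1) by (field; lra).
    assert (0 < / t) by (apply Rinv_0_lt_compat; auto). nra.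
Qed.

Lemma good_mulN c : good c -> good (fun n => Cmult (RtoC (INR (S n))) (c n)).
Proof.
  intros Hg r Hr. destruct (good_between c r Hg Hr) as [M [q [HM [Hq H]]]].
  destruct (bern q Hq) as [K HK]. exists (M * K). intros n.
  rewrite Cmod_mult, Cmod_R, Rabs_pos_eq by apply pos_INR.
  rewrite Rmult_assoc. eapply Rle_trans.
  apply Rmult_le_compat_l. apply pos_INR. apply H.
  specialize (HK n). nra.
Qed.

Lemma good_shift c : good c -> good (fun n => c (S n)).
Proof.
  intros Hg r Hr. set (r1 := (1 + r) / 2). destruct (Hg r1) as [M HM]. unfold r1; lra.
  exists (M / r1). intros n. specialize (HM (S n)).
  apply Rle_trans with (Cmod (c (S n)) * r1 ^ n).
  apply Rmult_le_compat_l. apply Cmod_ge_0. apply pow_incr. unfold r1; lra.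
  apply Rmult_le_reg_r with r1. unfold r1; lra.
  replace (M / r1 * r1) with M by (field; unfold r1; lra).
  simpl in HM. lra.
Qed.

Lemma good_le c d : good c -> (forall n, Cmod (d n) <= Cmod (c n)) -> good d.
Proof.
  intros Hg Hle r Hr. destruct (Hg r Hr) as [M HM]. exists M. intros n.
  eapply Rle_trans; [|apply HM]. apply Rmult_le_compat_r. apply pow_le; lra. auto.
Qed.

Lemma good_plus c d : good c -> good d -> good (fun n => Cplus (c n) (d n)).
Proof.
  intros Hc Hd r Hr. destruct (Hc r Hr) as [M1 H1]. destruct (Hd r Hr) as [M2 H2].
  exists (M1 + M2). intros n. eapply Rle_trans.
  apply Rmult_le_compat_r. apply pow_le; lra. apply Cmod_triangle.
  specialize (H1 n); specialize (H2 n). lra.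
Qed.

Lemma good_scal s c : good c -> good (fun n => Cmult s (c n)).
Proof.
  intros Hc r Hr. destruct (Hc r Hr) as [M1 H1].
  exists (Cmod s * M1). intros n. rewrite Cmod_mult, Rmult_assoc.
  apply Rmult_le_compat_l. apply Cmod_ge_0. auto.
Qed.

Definition incr1 (c : nat -> C) (n : nat) : C :=
  match n with O => RtoC 0 | S m => c m end.

Lemma good_incr1 c : good c -> good (incr1 c).
Proof.
  intros Hc r Hr. destruct (Hc r Hr) as [M1 H1].
  exists (Rmax M1 0). intros [|n]; simpl.
  rewrite Cmod_0. rewrite Rmult_0_l. apply Rmax_r.
  eapply Rle_trans; [|apply Rmax_l]. eapply Rle_trans; [|apply (H1 n)].
  assert (0 <= Cmod (c n) * r ^ n). apply Rmult_le_pos. apply Cmod_ge_0. apply pow_le; lra.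
  nra.
Qed.

Lemma good_ext c d : good c -> (forall n, c n = d n) -> good d.
Proof. intros H E. apply (good_le c d H). intros n; rewrite E; lra. Qed.

Definition dc (c : nat -> C) (n : nat) : C := Cmult (RtoC (INR (S n))) (c (S n)).

Lemma good_dc c : good c -> good (dc c).
Proof. intros H. apply (good_mulN (fun n => c (S n))). apply good_shift, H. Qed.

Lemma is_series_C_unique (a : nat -> C) l l' :
  @is_series C_AbsRing C_NormedModule a l -> @is_series C_AbsRing C_NormedModule a l' -> l = l'.
Proof.
  intros H1 H2. apply is_series_C in H1. apply is_series_C in H2.
  destruct H1 as [H1 H1'], H2 as [H2 H2'].
  apply C_ext.
  - apply is_series_unique in H1. apply is_series_unique in H2. congruence.
  - apply is_series_unique in H1'. apply is_series_unique in H2'. congruence.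
Qed.

Lemma PSC_correct c z : good c -> Cmod z < 1 ->
  @is_series C_AbsRing C_NormedModule (fun n => Cmult (c n) (Cpow z n)) (PSC c z).
Proof.
  intros Hg Hz. assert (Hs := good_summ c (Cmod z) Hg (conj (Cmod_ge_0 z) Hz)).
  apply is_series_C. unfold PSC; cbn [fst snd]. split; apply Series_correct;
  refine (@ex_series_le R_AbsRing R_CompleteNormedModule _ _ _ Hs); intros n;
  change norm with Rabs; rewrite <- Cmod_pow, <- Cmod_mult.
  apply re_le_Cmod. apply im_le_Cmod.
Qed.

Lemma PSC_eq c z l : good c -> Cmod z < 1 ->
  @is_series C_AbsRing C_NormedModule (fun n => Cmult (c n) (Cpow z n)) l -> PSC c z = l.
Proof. intros Hg Hz H. eapply is_series_C_unique. apply PSC_correct; auto. auto. Qed.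

Lemma PSC_ext c d z : (forall n, c n = d n) -> PSC c z = PSC d z.
Proof. intros E. unfold PSC. f_equal; apply Series_ext; intros n; rewrite E; auto. Qed.

Lemma PSC_plus c d z : good c -> good d -> Cmod z < 1 ->
  PSC (fun n => Cplus (c n) (d n)) z = Cplus (PSC c z) (PSC d z).
Proof.
  intros Hc Hd Hz. apply PSC_eq; auto. apply good_plus; auto.
  eapply is_series_ext; [|apply (is_series_plus _ _ _ _ (PSC_correct c z Hc Hz) (PSC_correct d z Hd Hz))].
  intros n. simpl. apply C_ext; simpl; ring.
Qed.

Lemma PSC_scal s c z : good c -> Cmod z < 1 ->
  PSC (fun n => Cmult s (c n)) z = Cmult s (PSC c z).
Proof.
  intros Hc Hz. apply PSC_eq; auto. apply good_scal; auto.
  eapply is_series_ext; [|apply (is_series_scal s _ _ (PSC_correct c z Hc Hz))].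
  intros n. simpl. apply C_ext; simpl; ring.
Qed.

Lemma PSC_shift c z : good c -> Cmod z < 1 ->
  PSC c z = Cplus (c 0%nat) (Cmult z (PSC (fun n => c (S n)) z)).
Proof.
  intros Hc Hz. apply PSC_eq; auto.
  apply is_series_decr_1.
  match goal with |- is_series _ ?l => replace l with (scal z (PSC (fun n : nat => c (S n)) z)) end.
  2: { simpl. apply C_ext; simpl; ring. }
  eapply is_series_ext; [|apply (is_series_scal z _ _ (PSC_correct _ z (good_shift c Hc) Hz))].
  intros n. simpl. apply C_ext; simpl; ring.
Qed.

Lemma PSC_incr1 c z : good c -> Cmod z < 1 ->
  PSC (incr1 c) z = Cmult z (PSC c z).
Proof.
  intros Hc Hz. rewrite PSC_shift; auto. 2: apply good_incr1; auto.
  simpl. rewrite (PSC_ext _ c) by reflexivity. apply C_ext; simpl; ring.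
Qed.

Lemma PSC_zero c d z : good c -> Cmod z < 1 -> (forall n, d n = RtoC 0) -> PSC d z = RtoC 0.
Proof.
  intros Hc Hz E. rewrite (PSC_ext d (fun n => Cmult (RtoC 0) (c n))).
  rewrite PSC_scal; auto. apply C_ext; simpl; ring.
  intros n. rewrite E. apply C_ext; simpl; ring.
Qed.

Lemma PSC_0 c : good c -> PSC c (RtoC 0) = c 0%nat.
Proof.
  intros Hc. rewrite PSC_shift; auto. apply C_ext; simpl; ring.
  rewrite Cmod_0; lra.
Qed.

Lemma is_derive_C_eps (f : C -> C) z d :
  @is_derive C_AbsRing C_NormedModule f z d ->
  forall eps, 0 < eps -> exists del, 0 < del /\ forall y, Cmod (Cminus y z) < del ->
    Cmod (Cminus (Cminus (f y) (f z)) (Cmult (Cminus y z) d)) <= eps * Cmod (Cminus y z).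
Proof.
  intros [_ H] eps Heps.
  specialize (H z (fun P HP => HP) (mkposreal eps Heps)).
  apply (@locally_le_locally_norm C_AbsRing (AbsRing_NormedModule C_AbsRing)) in H.
  destruct H as [del Hdel].
  exists del. split. apply cond_pos. intros y Hy.
  specialize (Hdel y). exact (Hdel Hy).
Qed.

Lemma C_eps_is_derive (f : C -> C) z d :
  (forall eps, 0 < eps -> exists del, 0 < del /\ forall y, Cmod (Cminus y z) < del ->
    Cmod (Cminus (Cminus (f y) (f z)) (Cmult (Cminus y z) d)) <= eps * Cmod (Cminus y z)) ->
  @is_derive C_AbsRing C_NormedModule f z d.
Proof.
  intros H. split. apply is_linear_scal_l.
  intros x Hx. apply (@is_filter_lim_locally_unique C_AbsRing (AbsRing_NormedModule C_AbsRing)) in Hx. subst x.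
  intros eps. apply (@locally_norm_le_locally C_AbsRing (AbsRing_NormedModule C_AbsRing)).
  destruct (H eps (cond_pos eps)) as [del [Hd Hdel]].
  exists (mkposreal del Hd). intros y Hy. apply Hdel. exact Hy.
Qed.

Lemma Series_nonneg (b : nat -> R) : (forall n, 0 <= b n) -> ex_series b -> 0 <= Series b.
Proof.
  intros Hb Hs. eapply Rle_trans. apply Rabs_pos.
  eapply Rle_trans. apply Series_Rabs. eapply ex_series_ext; [|exact Hs]. intros n; rewrite Rabs_pos_eq; auto.
  right. apply Series_ext. intros n; rewrite Rabs_pos_eq; auto.
Qed.

Lemma series_Cmod_bound (a : nat -> C) l b :
  @is_series C_AbsRing C_NormedModule a l -> (forall n, Cmod (a n) <= b n) -> ex_series b ->
  Cmod l <= sqrt 2 * Series b.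
Proof.
  intros Ha Hb Hs. eapply Rle_trans. apply Cmod_2Rmax.
  apply Rmult_le_compat_l. apply sqrt_pos.
  apply is_series_C in Ha. destruct Ha as [H1 H2].
  apply is_series_unique in H1. apply is_series_unique in H2.
  assert (E1 : ex_series (fun n => Rabs (fst (a n)))).
  { refine (@ex_series_le R_AbsRing R_CompleteNormedModule _ _ _ Hs). intros n.
    change norm with Rabs. rewrite Rabs_Rabsolu. eapply Rle_trans; [apply re_le_Cmod|apply Hb]. }
  assert (E2 : ex_series (fun n => Rabs (snd (a n)))).
  { refine (@ex_series_le R_AbsRing R_CompleteNormedModule _ _ _ Hs). intros n.
    change norm with Rabs. rewrite Rabs_Rabsolu. eapply Rle_trans; [apply im_le_Cmod|apply Hb]. }
  apply Rmax_lub.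
  - rewrite <- H1. eapply Rle_trans. apply Series_Rabs; auto.
    apply Series_le; auto. intros n; split. apply Rabs_pos. eapply Rle_trans; [apply re_le_Cmod|apply Hb].
  - rewrite <- H2. eapply Rle_trans. apply Series_Rabs; auto.
    apply Series_le; auto. intros n; split. apply Rabs_pos. eapply Rle_trans; [apply im_le_Cmod|apply Hb].
Qed.

Definition Ep (z u : C) (n : nat) : C :=
  Cminus (Cminus (Cpow u n) (Cpow z n))
         (Cmult (Cminus u z) (Cmult (RtoC (INR n)) (Cpow z (pred n)))).

Lemma Ep_0 z u : Ep z u 0 = RtoC 0.
Proof. unfold Ep. apply C_ext; simpl; ring. Qed.

Lemma Ep_rec z u n : Ep z u (S n) =
  Cplus (Cmult u (Ep z u n)) (Cmult (RtoC (INR n)) (Cmult (Cpow z (pred n)) (Cmult (Cminus u z) (Cminus u z)))).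
Proof.
  unfold Ep. destruct n.
  - apply C_ext; simpl; ring.
  - rewrite !S_INR. change (pred (S (S n))) with (S n). change (pred (S n)) with n.
    change (Cpow u (S (S n))) with (Cmult u (Cpow u (S n))).
    change (Cpow z (S (S n))) with (Cmult z (Cpow z (S n))).
    change (Cpow z (S n)) with (Cmult z (Cpow z n)).
    apply C_ext; simpl; ring.
Qed.

Lemma Ep_bound z u r : 0 < r -> Cmod z <= r -> Cmod u <= r ->
  forall n, r ^ 2 * Cmod (Ep z u n) <= INR n ^ 2 * r ^ n * Cmod (Cminus u z) ^ 2.
Proof.
  intros Hr Hz Hu n. induction n.
  - rewrite Ep_0, Cmod_0. simpl. lra.
  - rewrite Ep_rec. set (m := Cmod (Cminus u z)).
    assert (Hm : 0 <= m) by apply Cmod_ge_0.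
    assert (He : 0 <= Cmod (Ep z u n)) by apply Cmod_ge_0.
    assert (Hn : 0 <= INR n) by apply pos_INR.
    assert (Hrn : 0 <= r ^ n) by (apply pow_le; lra).
    eapply Rle_trans. apply Rmult_le_compat_l. nra. apply Cmod_triangle.
    rewrite !Cmod_mult, Cmod_R, Cmod_pow, Rabs_pos_eq by auto. fold m.
    assert (Hp : INR n * (r ^ 2 * (Cmod z ^ pred n)) <= INR n * r ^ S n).
    { destruct n. simpl. lra. simpl pred. apply Rmult_le_compat_l. auto.
      replace (r ^ S (S n)) with (r ^ 2 * r ^ n) by (simpl; ring).
      apply Rmult_le_compat_l. nra. apply pow_incr. split; auto. apply Cmod_ge_0. }
    assert (Hzp : 0 <= Cmod z ^ pred n) by (apply pow_le, Cmod_ge_0).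
    rewrite S_INR. simpl pow. simpl pow in IHn, Hp.
    assert (Hu0 : 0 <= Cmod u) by apply Cmod_ge_0.
    assert (A1 : r * r * (Cmod u * Cmod (Ep z u n)) <= r * (INR n * INR n * r ^ n * (m * m))).
    { fold m in IHn. ring_simplify in IHn.
      assert (r * r * (Cmod u * Cmod (Ep z u n)) <= r * (r * r * Cmod (Ep z u n))).
      { assert (0 <= (r - Cmod u) * (r * r * Cmod (Ep z u n))).
        apply Rmult_le_pos. lra. apply Rmult_le_pos; [nra|auto]. nra. }
      eapply Rle_trans. eauto. apply Rmult_le_compat_l. lra.
      ring_simplify. lra. }
    assert (A2 : r * r * (INR n * (Cmod z ^ pred n * (m * m))) <= INR n * r * r ^ n * (m * m)).
    { assert (0 <= m * m) by nra. nra. }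
    assert (0 <= m * m) by nra.
    assert (0 <= INR n * r ^ n * (m*m)) by (apply Rmult_le_pos; [nra|auto]).
    assert (0 <= (INR n + 1) * r * r ^ n * (m*m)) by (apply Rmult_le_pos; [apply Rmult_le_pos; [apply Rmult_le_pos|]|]; lra).
    apply Rle_trans with (r * (INR n * INR n * r ^ n * (m * m)) + INR n * r * r ^ n * (m * m)).
    { replace (r * (r * 1) * (Cmod u * Cmod (Ep z u n) + INR n * (Cmod z ^ Init.Nat.pred n * (m * m))))
        with (r * r * (Cmod u * Cmod (Ep z u n)) + r * r * (INR n * (Cmod z ^ pred n * (m * m)))) by ring.
      lra. }
    match goal with |- _ <= ?R => replace R with (r * (INR n * INR n * r ^ n * (m * m)) + INR n * r * r ^ n * (m * m) + (INR n + 1) * r * r ^ n * (m*m)) by ring end.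
    lra.
Qed.

Lemma PSC_derive c z : good c -> Cmod z < 1 ->
  @is_derive C_AbsRing C_NormedModule (PSC c) z (PSC (dc c) z).
Proof.
  intros Hg Hz. apply C_eps_is_derive. intros eps Heps.
  assert (Hz0 := Cmod_ge_0 z).
  set (r := (1 + Cmod z) / 2).
  assert (Hr : 0 < r) by (unfold r; lra).
  assert (Hzr : Cmod z < r) by (unfold r; lra).
  assert (Hr1 : r < 1) by (unfold r; lra).
  set (c2 := fun n => Cmult (RtoC (INR (S n))) (Cmult (RtoC (INR (S n))) (c n))).
  assert (Hg2 : good c2) by (apply (good_mulN (fun n => Cmult (RtoC (INR (S n))) (c n))), good_mulN, Hg).
  assert (Hs := good_summ c2 r Hg2 (conj (Rlt_le _ _ Hr) Hr1)).
  set (Ssum := Series (fun n => Cmod (c2 n) * r ^ n)).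
  assert (HS : 0 <= Ssum).
  { apply Series_nonneg; auto. intros n. apply Rmult_le_pos. apply Cmod_ge_0. apply pow_le; lra. }
  assert (Hsq : 0 <= sqrt 2) by apply sqrt_pos.
  assert (Hden : 0 < sqrt 2 * Ssum + 1) by nra.
  exists (Rmin (r - Cmod z) (eps * r ^ 2 / (sqrt 2 * Ssum + 1))).
  split. apply Rmin_pos. lra. apply Rdiv_lt_0_compat; [|auto]. apply Rmult_lt_0_compat; auto. nra.
  intros y Hy.
  set (m := Cmod (Cminus y z)).
  assert (Hm0 : 0 <= m) by apply Cmod_ge_0.
  assert (Hm1 : m < r - Cmod z) by (eapply Rlt_le_trans; [apply Hy | apply Rmin_l]).
  assert (Hm2 : m < eps * r ^ 2 / (sqrt 2 * Ssum + 1)) by (eapply Rlt_le_trans; [apply Hy | apply Rmin_r]).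
  assert (Hyr : Cmod y <= r).
  { replace y with (Cplus z (Cminus y z)) by (apply C_ext; simpl; ring).
    eapply Rle_trans. apply Cmod_triangle. fold m. lra. }
  assert (Hy1 : Cmod y < 1) by lra.
  assert (H3 : @is_series C_AbsRing C_NormedModule
     (fun n => Cmult (c n) (Cmult (RtoC (INR n)) (Cpow z (pred n)))) (PSC (dc c) z)).
  { apply is_series_decr_1.
    match goal with |- is_series _ ?l => replace l with (PSC (dc c) z) by (apply C_ext; simpl; ring) end.
    eapply is_series_ext; [|apply (PSC_correct (dc c) z (good_dc c Hg) Hz)].
    intros n. unfold dc. simpl pred. apply C_ext; simpl; ring. }
  assert (H6 := is_series_minus _ _ _ _ (is_series_minus _ _ _ _ (PSC_correct c y Hg Hy1) (PSC_correct c z Hg Hz))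
                  (is_series_scal (Cminus y z) _ _ H3)).
  set (L := Cminus (Cminus (PSC c y) (PSC c z)) (Cmult (Cminus y z) (PSC (dc c) z))).
  assert (Hser : @is_series C_AbsRing C_NormedModule (fun n => Cmult (c n) (Ep z y n)) L).
  { match type of H6 with is_series _ ?l => replace L with l by (unfold L; apply C_ext; simpl; ring) end.
    eapply is_series_ext; [|exact H6]. intros n. unfold Ep. apply C_ext; simpl; ring. }
  assert (Hb := series_Cmod_bound _ _ (fun n => Cmod (c2 n) * r ^ n * (m ^ 2 / r ^ 2)) Hser).
  rewrite Series_scal_r in Hb. fold Ssum in Hb.
  assert (HL : Cmod L <= sqrt 2 * (Ssum * (m ^ 2 / r ^ 2))).
  { apply Hb. 2: apply ex_series_scal_r; auto.
    intros n. rewrite Cmod_mult.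
    assert (HE := Ep_bound z y r Hr (Rlt_le _ _ Hzr) Hyr n). fold m in HE.
    assert (Hc2 : Cmod (c2 n) = INR (S n) ^ 2 * Cmod (c n)).
    { unfold c2. rewrite !Cmod_mult, Cmod_R, Rabs_pos_eq by apply pos_INR. ring. }
    rewrite Hc2.
    assert (Hr2 : 0 < r ^ 2) by (apply pow_lt; auto).
    assert (Hcn := Cmod_ge_0 (c n)).
    assert (HEp : Cmod (Ep z y n) <= INR n ^ 2 * r ^ n * m ^ 2 / r ^ 2).
    { apply Rmult_le_reg_l with (r ^ 2); auto. unfold Rdiv.
      replace (r ^ 2 * (INR n ^ 2 * r ^ n * m ^ 2 * / r ^ 2)) with (INR n ^ 2 * r ^ n * m ^ 2) by (field; lra). auto. }
    assert (Hnn : INR n ^ 2 <= INR (S n) ^ 2).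
    { rewrite S_INR. assert (0 <= INR n) by apply pos_INR. nra. }
    assert (0 <= r ^ n * m ^ 2 / r ^ 2).
    { apply Rmult_le_pos. apply Rmult_le_pos. apply pow_le; lra. nra. left; apply Rinv_0_lt_compat; auto. }
    apply Rle_trans with (Cmod (c n) * (INR n ^ 2 * r ^ n * m ^ 2 / r ^ 2)).
    apply Rmult_le_compat_l; auto.
    replace (Cmod (c n) * (INR n ^ 2 * r ^ n * m ^ 2 / r ^ 2)) with (Cmod (c n) * INR n ^ 2 * (r ^ n * m ^ 2 / r ^ 2)) by (unfold Rdiv; ring).
    replace (INR (S n) ^ 2 * Cmod (c n) * r ^ n * (m ^ 2 / r ^ 2)) with (Cmod (c n) * INR (S n) ^ 2 * (r ^ n * m ^ 2 / r ^ 2)) by (unfold Rdiv; ring).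
    apply Rmult_le_compat_r; auto. apply Rmult_le_compat_l; auto. }
  fold L. eapply Rle_trans. apply HL.
  assert (Hr2 : 0 < r ^ 2) by (apply pow_lt; auto).
  assert (Hk : m * (sqrt 2 * Ssum + 1) <= eps * r ^ 2).
  { apply Rmult_lt_compat_r with (r := sqrt 2 * Ssum + 1) in Hm2; auto.
    unfold Rdiv in Hm2. rewrite Rmult_assoc, Rinv_l in Hm2; lra. }
  apply Rmult_le_reg_r with (r ^ 2); auto.
  replace (sqrt 2 * (Ssum * (m ^ 2 / r ^ 2)) * r ^ 2) with (sqrt 2 * Ssum * m * m) by (field; lra).
  assert (0 <= sqrt 2 * Ssum * m) by (apply Rmult_le_pos; [apply Rmult_le_pos|]; auto).
  nra.
Qed.

Lemma CR_gen (p : C -> R) f z0 d u v t0 :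
  (forall w, Rabs (p w) <= Cmod w) ->
  (forall a b, p (Cminus a b) = p a - p b) ->
  (forall (h : R) w, p (Cmult (RtoC h) w) = h * p w) ->
  @is_derive C_AbsRing C_NormedModule f z0 d -> z0 = Cplus u (Cmult (RtoC t0) v) ->
  is_derive (fun t => p (f (Cplus u (Cmult (RtoC t) v)))) t0 (p (Cmult v d)).
Proof.
  intros Hp1 Hp2 Hp3 Hd E. apply is_derive_Reals. intros eps Heps.
  assert (Hv := Cmod_ge_0 v).
  assert (He' : 0 < eps / (2 * (Cmod v + 1))) by (apply Rdiv_lt_0_compat; lra).
  destruct (is_derive_C_eps f z0 d Hd _ He') as [del [Hdel Hb]].
  assert (Hd' : 0 < del / (Cmod v + 1)) by (apply Rdiv_lt_0_compat; lra).
  exists (mkposreal _ Hd'). simpl. intros h Hh0 Hh.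
  set (y := Cplus u (Cmult (RtoC (t0 + h)) v)).
  assert (Ey : Cminus y z0 = Cmult (RtoC h) v) by (subst z0; unfold y; apply C_ext; simpl; ring).
  assert (Hah : 0 < Rabs h) by (apply Rabs_pos_lt; auto).
  assert (Hy : Cmod (Cminus y z0) < del).
  { rewrite Ey, Cmod_mult, Cmod_R.
    apply Rmult_lt_compat_r with (r := Cmod v + 1) in Hh; [|lra].
    unfold Rdiv in Hh. rewrite Rmult_assoc, Rinv_l, Rmult_1_r in Hh by lra. nra. }
  specialize (Hb y Hy). rewrite Ey, Cmod_mult, Cmod_R in Hb.
  rewrite <- E. fold y.
  assert (Hq : Rabs (p (Cminus (Cminus (f y) (f z0)) (Cmult (Cmult (RtoC h) v) d))) <=
     eps / (2 * (Cmod v + 1)) * (Rabs h * Cmod v)) by (eapply Rle_trans; [apply Hp1 | exact Hb]).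
  rewrite !Hp2 in Hq.
  replace (Cmult (Cmult (RtoC h) v) d) with (Cmult (RtoC h) (Cmult v d)) in Hq by (apply C_ext; simpl; ring).
  rewrite Hp3 in Hq.
  replace ((p (f y) - p (f z0)) / h - p (Cmult v d)) with ((p (f y) - p (f z0) - h * p (Cmult v d)) / h) by (field; auto).
  unfold Rdiv. rewrite Rabs_mult, Rabs_inv.
  apply Rmult_lt_reg_r with (Rabs h); auto.
  rewrite Rmult_assoc, Rinv_l, Rmult_1_r by lra.
  eapply Rle_lt_trans. exact Hq.
  assert (eps / (2 * (Cmod v + 1)) * Cmod v < eps).
  { unfold Rdiv. apply Rmult_lt_reg_r with (2 * (Cmod v + 1)). lra.
    replace (eps * / (2 * (Cmod v + 1)) * Cmod v * (2 * (Cmod v + 1))) with (eps * Cmod v) by (field; lra). nra. }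
  nra.
Qed.

Lemma CR_fst f z0 d u v t0 :
  @is_derive C_AbsRing C_NormedModule f z0 d -> z0 = Cplus u (Cmult (RtoC t0) v) ->
  is_derive (fun t => fst (f (Cplus u (Cmult (RtoC t) v)))) t0 (fst (Cmult v d)).
Proof.
  apply CR_gen. apply re_le_Cmod. intros; simpl; ring. intros; simpl; ring.
Qed.

Lemma CR_snd f z0 d u v t0 :
  @is_derive C_AbsRing C_NormedModule f z0 d -> z0 = Cplus u (Cmult (RtoC t0) v) ->
  is_derive (fun t => snd (f (Cplus u (Cmult (RtoC t) v)))) t0 (snd (Cmult v d)).
Proof.
  apply CR_gen. apply im_le_Cmod. intros; simpl; ring. intros; simpl; ring.
Qed.

Lemma deriv_unique_loc f g z d1 d2 r : 0 < r ->
  @is_derive C_AbsRing C_NormedModule f z d1 -> @is_derive C_AbsRing C_NormedModule g z d2 ->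
  (forall y, Cmod (Cminus y z) < r -> f y = g y) -> d1 = d2.
Proof.
  intros Hr H1 H2 E.
  assert (Ez : z = Cplus z (Cmult (RtoC 0) (RtoC 1))) by (apply C_ext; simpl; ring).
  assert (Hloc : locally 0 (fun t => f (Cplus z (Cmult (RtoC t) (RtoC 1))) = g (Cplus z (Cmult (RtoC t) (RtoC 1))))).
  { exists (mkposreal r Hr). intros t Ht. change R in t. apply E.
    replace (Cminus (Cplus z (Cmult (RtoC t) (RtoC 1))) z) with (RtoC t) by (apply C_ext; simpl; ring).
    rewrite Cmod_R. change (Rabs (t - 0) < r) in Ht. rewrite Rminus_0_r in Ht. auto. }
  assert (Hf1 := CR_fst f z d1 z (RtoC 1) 0 H1 Ez).
  assert (Hf2 := CR_fst g z d2 z (RtoC 1) 0 H2 Ez).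
  assert (Hs1 := CR_snd f z d1 z (RtoC 1) 0 H1 Ez).
  assert (Hs2 := CR_snd g z d2 z (RtoC 1) 0 H2 Ez).
  apply is_derive_ext_loc with (g := fun t => fst (g (Cplus z (Cmult (RtoC t) (RtoC 1))))) in Hf1.
  apply is_derive_ext_loc with (g := fun t => snd (g (Cplus z (Cmult (RtoC t) (RtoC 1))))) in Hs1.
  apply is_derive_unique in Hf1. apply is_derive_unique in Hf2.
  apply is_derive_unique in Hs1. apply is_derive_unique in Hs2.
  apply C_ext.
  - replace (fst d1) with (fst (Cmult (RtoC 1) d1)) by (simpl; ring).
    replace (fst d2) with (fst (Cmult (RtoC 1) d2)) by (simpl; ring). rewrite <- Hf1, <- Hf2; reflexivity.
  - replace (snd d1) with (snd (Cmult (RtoC 1) d1)) by (simpl; ring).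
    replace (snd d2) with (snd (Cmult (RtoC 1) d2)) by (simpl; ring). rewrite <- Hs1, <- Hs2; reflexivity.
  - eapply filter_imp; [|exact Hloc]. intros t Ht; simpl; rewrite Ht; auto.
  - eapply filter_imp; [|exact Hloc]. intros t Ht; simpl; rewrite Ht; auto.
Qed.

Lemma PSC_unique0 n : forall c, good c -> (forall z, Cmod z < 1 -> PSC c z = RtoC 0) -> c n = RtoC 0.
Proof.
  induction n; intros c Hg H0.
  - rewrite <- PSC_0 by auto. apply H0. rewrite Cmod_0; lra.
  - set (c' := fun k => c (S k)). change (c (S n)) with (c' n).
    assert (Hg' : good c') by (apply good_shift; auto).
    assert (Hc0 : c 0%nat = RtoC 0) by (rewrite <- PSC_0 by auto; apply H0; rewrite Cmod_0; lra).
    assert (Hnz : forall z, Cmod z < 1 -> z <> RtoC 0 -> PSC c' z = RtoC 0).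
    { intros z Hz Hz0. assert (E := PSC_shift c z Hg Hz). rewrite H0, Hc0 in E by auto.
      fold c' in E.
      assert (E2 : Cmult z (PSC c' z) = RtoC 0) by (rewrite E; apply C_ext; simpl; ring).
      assert (E3 : PSC c' z = Cmult (Cinv z) (Cmult z (PSC c' z))) by (field; auto).
      rewrite E3, E2. apply C_ext; simpl; ring. }
    apply IHn; auto. intros z Hz.
    destruct (Ceq_dec z (RtoC 0)) as [Ez|Ez]; [|apply Hnz; auto].
    subst z.
    assert (Hd := PSC_derive c' (RtoC 0) Hg' Hz).
    set (d := PSC (dc c') (RtoC 0)) in Hd.
    destruct (is_derive_C_eps _ _ _ Hd 1 Rlt_0_1) as [del [Hdel Hb]].
    set (q := Cmod (PSC c' (RtoC 0))).
    destruct (Req_dec q 0) as [Hq|Hq]. apply Cmod_eq_0; auto.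
    exfalso. assert (Hq0 : 0 < q) by (assert (0 <= q) by apply Cmod_ge_0; lra).
    set (K := 1 + Cmod d). assert (HK : 0 < K) by (assert (0 <= Cmod d) by apply Cmod_ge_0; unfold K; lra).
    set (s := Rmin (Rmin (del / 2) (1 / 2)) (q / (2 * K))).
    assert (Hs0 : 0 < s) by (unfold s; repeat apply Rmin_pos; try apply Rdiv_lt_0_compat; lra).
    assert (Hs1 : s <= del / 2) by (unfold s; eapply Rle_trans; apply Rmin_l).
    assert (Hs2 : s <= 1 / 2) by (unfold s; eapply Rle_trans; [apply Rmin_l | apply Rmin_r]).
    assert (Hs3 : s <= q / (2 * K)) by (unfold s; apply Rmin_r).
    assert (Hms : Cmod (RtoC s) = s) by (rewrite Cmod_R; apply Rabs_pos_eq; lra).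
    assert (Ey : Cminus (RtoC s) (RtoC 0) = RtoC s) by (apply C_ext; simpl; ring).
    specialize (Hb (RtoC s)). rewrite Ey, Hms in Hb. specialize (Hb ltac:(lra)).
    rewrite Hnz in Hb by (try rewrite Hms; try lra; intros Hc; apply (f_equal fst) in Hc; simpl in Hc; lra).
    replace (Cminus (Cminus (RtoC 0) (PSC c' (RtoC 0))) (Cmult (RtoC s) d))
      with (Copp (Cplus (PSC c' (RtoC 0)) (Cmult (RtoC s) d))) in Hb by (apply C_ext; simpl; ring).
    rewrite Cmod_opp in Hb.
    assert (Ht := Cmod_triangle (Cplus (PSC c' (RtoC 0)) (Cmult (RtoC s) d)) (Copp (Cmult (RtoC s) d))).
    replace (Cplus (Cplus (PSC c' (RtoC 0)) (Cmult (RtoC s) d)) (Copp (Cmult (RtoC s) d)))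
      with (PSC c' (RtoC 0)) in Ht by (apply C_ext; simpl; ring).
    rewrite Cmod_opp, Cmod_mult, Hms in Ht. fold q in Ht.
    assert (s * K <= q / 2).
    { apply Rmult_le_compat_r with (r := K) in Hs3; [|lra].
      replace (q / (2 * K) * K) with (q / 2) in Hs3 by (field; lra). auto. }
    unfold K in *. nra.
Qed.

Lemma PSC_coef_eq c d : good c -> good d ->
  (forall z, Cmod z < 1 -> PSC c z = PSC d z) -> forall n, c n = d n.
Proof.
  intros Hc Hd H n.
  assert (E : Cplus (c n) (Cmult (RtoC (-1)) (d n)) = RtoC 0).
  { apply (PSC_unique0 n (fun k => Cplus (c k) (Cmult (RtoC (-1)) (d k)))).
    apply good_plus; auto. apply good_scal; auto.
    intros z Hz. rewrite PSC_plus, PSC_scal, H; auto. apply C_ext; simpl; ring.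
    apply good_scal; auto. }
  apply (f_equal (fun w => Cplus w (d n))) in E.
  replace (Cplus (Cplus (c n) (Cmult (RtoC (-1)) (d n))) (d n)) with (c n) in E by (apply C_ext; simpl; ring).
  rewrite E. apply C_ext; simpl; ring.
Qed.

Fixpoint gam (a : R) (n : nat) : R :=
  match n with
  | O => 0
  | S O => 1
  | S ((S m) as k) => (INR m * gam a m + 2 * a * gam a k) / (INR m + 2)
  end.

Definition gC (a : R) (n : nat) : C := RtoC (gam a n).

Lemma gam_SS a m : gam a (S (S m)) = (INR m * gam a m + 2 * a * gam a (S m)) / (INR m + 2).
Proof. reflexivity. Qed.

Lemma term_le_sum (s : nat -> R) N k : (forall n, 0 <= s n) -> (k <= N)%nat -> s k <= sum_f_R0 s N.
Proof.
  intros Hs Hk. induction N.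
  - assert (k = 0%nat) by lia. subst. simpl. lra.
  - destruct (Nat.eq_dec k (S N)) as [->|Hne].
    + simpl. assert (0 <= sum_f_R0 s N). { apply cond_pos_sum; auto. } lra.
    + simpl. assert (s k <= sum_f_R0 s N) by (apply IHN; lia). specialize (Hs (S N)). lra.
Qed.

Lemma good_gam a : good (gC a).
Proof.
  intros r Hr.
  set (s := fun n => Rabs (gam a n) * r ^ n).
  assert (Hs : forall n, 0 <= s n) by (intros n; apply Rmult_le_pos; [apply Rabs_pos|apply pow_le; lra]).
  assert (H1r : 0 < 1 - r ^ 2) by nra.
  destruct (INR_unbounded (2 * Rabs a / (1 - r ^ 2))) as [N HN].
  set (M := sum_f_R0 s (S N)).
  exists M.
  assert (Hmain : forall n, s n <= M /\ s (S n) <= M).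
  { induction n.
    - split; apply term_le_sum; auto; lia.
    - destruct IHn as [IH1 IH2]. split; auto.
      destruct (Compare_dec.le_lt_dec (S (S n)) (S N)) as [Hle|Hlt].
      + apply term_le_sum; auto.
      + assert (HnN : (N <= n)%nat) by lia.
        apply le_INR in HnN.
        unfold s. rewrite gam_SS.
        assert (Hn0 : 0 <= INR n) by apply pos_INR.
        assert (HM0 : 0 <= M) by (unfold M; apply cond_pos_sum; auto).
        unfold s in IH1, IH2.
        assert (Ha : 2 * Rabs a <= INR n * (1 - r ^ 2)).
        { apply Rmult_lt_compat_r with (r := 1 - r^2) in HN; auto.
          unfold Rdiv in HN. rewrite Rmult_assoc, Rinv_l, Rmult_1_r in HN by lra. nra. }
        unfold Rdiv. rewrite Rabs_mult, Rabs_inv, (Rabs_pos_eq (INR n + 2)) by lra.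
        assert (Hb : Rabs (INR n * gam a n + 2 * a * gam a (S n)) * r ^ S (S n) <=
                     INR n * r ^ 2 * (Rabs (gam a n) * r ^ n) + 2 * Rabs a * r * (Rabs (gam a (S n)) * r ^ S n)).
        { eapply Rle_trans. apply Rmult_le_compat_r. apply pow_le; lra. apply Rabs_triang.
          rewrite !Rabs_mult, (Rabs_pos_eq (INR n)), (Rabs_pos_eq 2) by lra.
          simpl pow. right. ring. }
        assert (Hc : INR n * r ^ 2 * (Rabs (gam a n) * r ^ n) + 2 * Rabs a * r * (Rabs (gam a (S n)) * r ^ S n)
                     <= (INR n * r ^ 2 + 2 * Rabs a) * M).
        { assert (0 <= INR n * r ^ 2) by (apply Rmult_le_pos; auto; apply pow_le; lra).
          assert (0 <= Rabs a) by apply Rabs_pos.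
          assert (2 * Rabs a * r * (Rabs (gam a (S n)) * r ^ S n) <= 2 * Rabs a * M).
          { assert (Rabs (gam a (S n)) * r ^ S n <= M) by auto.
            assert (0 <= Rabs (gam a (S n)) * r ^ S n) by (apply Rmult_le_pos; [apply Rabs_pos | apply pow_le; lra]).
            assert (r * (Rabs (gam a (S n)) * r ^ S n) <= M) by nra.
            replace (2 * Rabs a * r * (Rabs (gam a (S n)) * r ^ S n)) with (2 * Rabs a * (r * (Rabs (gam a (S n)) * r ^ S n))) by ring.
            apply Rmult_le_compat_l; lra. }
          assert (INR n * r ^ 2 * (Rabs (gam a n) * r ^ n) <= INR n * r ^ 2 * M).
          { apply Rmult_le_compat_l; auto. }
          replace ((INR n * r ^ 2 + 2 * Rabs a) * M) with (INR n * r ^ 2 * M + 2 * Rabs a * M) by ring. lra. }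
        assert (Hd : (INR n * r ^ 2 + 2 * Rabs a) * M <= (INR n + 2) * M) by nra.
        replace (Rabs (INR n * gam a n + 2 * a * gam a (S n)) * / (INR n + 2) * r ^ S (S n))
          with (Rabs (INR n * gam a n + 2 * a * gam a (S n)) * r ^ S (S n) / (INR n + 2)) by (field; lra).
        apply Rmult_le_reg_r with (INR n + 2). lra.
        unfold Rdiv. rewrite Rmult_assoc, Rinv_l, Rmult_1_r by lra. lra. }
  intros n. unfold gC. rewrite Cmod_R. apply Hmain.
Qed.

Definition e0 (n : nat) : C := match n with O => RtoC 1 | _ => RtoC 0 end.

Lemma good_e0 : good e0.
Proof.
  intros r Hr. exists 1. intros [|n]; simpl e0.
  rewrite Cmod_1; simpl; lra. rewrite Cmod_0. assert (0 <= r ^ S n) by (apply pow_le; lra). nra.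
Qed.

Lemma PSC_e0 w : Cmod w < 1 -> PSC e0 w = RtoC 1.
Proof.
  intros Hw. rewrite PSC_shift; auto. 2: apply good_e0.
  rewrite (PSC_zero e0 (fun n => e0 (S n))); auto. apply C_ext; simpl; ring. apply good_e0.
Qed.

Lemma good_gdc a : good (dc (gC a)).
Proof. apply good_dc, good_gam. Qed.

Lemma gam_ode a w : Cmod w < 1 ->
  Cmult (Cminus (RtoC 1) (Cmult w w)) (PSC (dc (gC a)) w) =
  Cplus (RtoC 1) (Cmult (RtoC (2 * a)) (PSC (gC a) w)).
Proof.
  intros Hw. set (u := dc (gC a)).
  assert (Hu : good u) by apply good_gdc.
  assert (Hu2 : good (incr1 (incr1 u))) by (apply good_incr1, good_incr1, Hu).
  transitivity (PSC (fun n => Cplus (u n) (Cmult (RtoC (-1)) (incr1 (incr1 u) n))) w).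
  { rewrite PSC_plus, PSC_scal, !PSC_incr1; auto. apply C_ext; simpl; ring.
    apply good_incr1; auto. apply good_scal; auto. }
  transitivity (PSC (fun n => Cplus (e0 n) (Cmult (RtoC (2 * a)) (gC a n))) w).
  2: { rewrite PSC_plus, PSC_scal, PSC_e0; auto. apply good_gam. apply good_e0.
       apply good_scal, good_gam. }
  apply PSC_ext. intros [|[|m]].
  - unfold u, dc, gC. simpl. apply C_ext; simpl; ring.
  - change (incr1 (incr1 u) 1%nat) with (RtoC 0). unfold u, dc, gC, e0.
    rewrite gam_SS. change (gam a 1) with 1. change (gam a 0) with 0.
    apply C_ext; cbn [fst snd RtoC Cplus Cmult]; simpl INR; field.
  - change (incr1 (incr1 u) (S (S m))) with (u m). unfold u, dc, gC, e0.
    rewrite (gam_SS a (S m)). rewrite !S_INR.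
    assert (0 <= INR m) by apply pos_INR.
    apply C_ext; cbn [fst snd RtoC Cplus Cmult]. field. lra. ring.
Qed.

Definition tz (z : C) (t : R) : C := Cmult (RtoC t) z.
Definition wt (z : C) (t : R) : C :=
  Cdiv (Cplus (RtoC 1) (tz z t)) (Cminus (RtoC 1) (tz z t)).
Definition l1 z t := ln (Cmod (wt z t)).
Definition l2 z t := Carg (wt z t).
Definition N1 (z : C) t := (1 + t * fst z) ^ 2 + (t * snd z) ^ 2.
Definition N2 (z : C) t := (1 - t * fst z) ^ 2 + (t * snd z) ^ 2.
Definition Dd (z : C) t := 1 - t ^ 2 * (fst z ^ 2 + snd z ^ 2).
Definition Lp1 z t := 2 * fst z * Dd z t / (N1 z t * N2 z t).
Definition Lp2 z t := 2 * snd z * (1 + t ^ 2 * (fst z ^ 2 + snd z ^ 2)) / (N1 z t * N2 z t).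

Lemma ln_sqrt' u : 0 < u -> ln (sqrt u) = ln u / 2.
Proof.
  intros Hu. assert (Hs : 0 < sqrt u) by (apply sqrt_lt_R0; auto).
  assert (E : ln u = ln (sqrt u) + ln (sqrt u)) by (rewrite <- ln_mult, sqrt_sqrt; auto; lra).
  lra.
Qed.

Lemma tz_mod z t : Cmod (tz z t) ^ 2 = t ^ 2 * (fst z ^ 2 + snd z ^ 2).
Proof. rewrite Cmod2_alt. unfold tz. simpl. ring. Qed.

Lemma pos_facts z t : Cmod (tz z t) < 1 -> 0 < N1 z t /\ 0 < N2 z t /\ 0 < Dd z t.
Proof.
  intros H. assert (E := tz_mod z t). set (rho := Cmod (tz z t)) in *.
  assert (Hr : 0 <= rho) by apply Cmod_ge_0.
  set (x := t * fst z). set (y := t * snd z).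
  assert (Exy : x ^ 2 + y ^ 2 = rho ^ 2) by (unfold x, y; rewrite E; ring).
  assert (Hx1 : x <= rho) by nra. assert (Hx2 : - rho <= x) by nra.
  unfold N1, N2, Dd. fold x y. split; [|split]; nra.
Qed.

Lemma wt_fst z t : Cmod (tz z t) < 1 -> fst (wt z t) = Dd z t / N2 z t.
Proof.
  intros H. destruct (pos_facts z t H) as [H1 [H2 H3]].
  unfold wt, Dd, N2 in *. unfold tz, Cdiv. simpl. field. unfold N2 in H2. nra.
Qed.

Lemma wt_snd z t : Cmod (tz z t) < 1 -> snd (wt z t) = 2 * t * snd z / N2 z t.
Proof.
  intros H. destruct (pos_facts z t H) as [H1 [H2 H3]].
  unfold wt, N2 in *. unfold tz, Cdiv. simpl. field. nra.
Qed.

Lemma l1_expl z t : Cmod (tz z t) < 1 -> l1 z t = (ln (N1 z t) - ln (N2 z t)) / 2.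
Proof.
  intros H. destruct (pos_facts z t H) as [H1 [H2 H3]].
  unfold l1. unfold Cmod at 1. rewrite wt_fst, wt_snd by auto.
  replace ((Dd z t / N2 z t) ^ 2 + (2 * t * snd z / N2 z t) ^ 2) with (N1 z t / N2 z t).
  rewrite ln_sqrt', ln_div by (try apply Rdiv_lt_0_compat; auto). lra.
  unfold N1, N2, Dd in *. field. lra.
Qed.

Lemma l2_expl z t : Cmod (tz z t) < 1 -> l2 z t = atan (2 * t * snd z / Dd z t).
Proof.
  intros H. destruct (pos_facts z t H) as [H1 [H2 H3]].
  unfold l2, Carg. rewrite wt_fst, wt_snd by auto.
  destruct (Rlt_dec 0 (Dd z t / N2 z t)) as [_|Hn].
  f_equal. field. split; lra.
  exfalso. apply Hn. apply Rdiv_lt_0_compat; auto.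
Qed.

Lemma l1_0 z : l1 z 0 = 0.
Proof.
  rewrite l1_expl. unfold N1, N2. replace ((1 + 0 * fst z) ^ 2 + (0 * snd z) ^ 2) with 1 by ring.
  replace ((1 - 0 * fst z) ^ 2 + (0 * snd z) ^ 2) with 1 by ring. rewrite ln_1. lra.
  replace (tz z 0) with (RtoC 0) by (unfold tz; apply C_ext; simpl; ring). rewrite Cmod_0; lra.
Qed.

Lemma l2_0 z : l2 z 0 = 0.
Proof.
  rewrite l2_expl. replace (2 * 0 * snd z / Dd z 0) with 0 by (unfold Rdiv; ring). apply atan_0.
  replace (tz z 0) with (RtoC 0) by (unfold tz; apply C_ext; simpl; ring). rewrite Cmod_0; lra.
Qed.

Lemma tz_open z t0 : Cmod (tz z t0) < 1 -> locally t0 (fun t => Cmod (tz z t) < 1).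
Proof.
  intros H. unfold tz in *. rewrite Cmod_mult, Cmod_R in H.
  assert (Hz := Cmod_ge_0 z).
  assert (Hd : 0 < (1 - Rabs t0 * Cmod z) / (Cmod z + 1)) by (apply Rdiv_lt_0_compat; lra).
  exists (mkposreal _ Hd). intros t Ht. change (Rabs (t - t0) < (1 - Rabs t0 * Cmod z) / (Cmod z + 1)) in Ht.
  rewrite Cmod_mult, Cmod_R.
  assert (Rabs t <= Rabs t0 + Rabs (t - t0)).
  { replace t with (t0 + (t - t0)) at 1 by ring. apply Rabs_triang. }
  assert (Rabs (t - t0) * (Cmod z + 1) < 1 - Rabs t0 * Cmod z).
  { apply Rmult_lt_compat_r with (r := Cmod z + 1) in Ht; [|lra].
    unfold Rdiv in Ht. rewrite Rmult_assoc, Rinv_l, Rmult_1_r in Ht by lra. auto. }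
  assert (0 <= Rabs (t - t0)) by apply Rabs_pos.
  nra.
Qed.

Lemma l1_deriv z t : Cmod (tz z t) < 1 -> is_derive (l1 z) t (Lp1 z t).
Proof.
  intros H. destruct (pos_facts z t H) as [H1 [H2 H3]].
  apply is_derive_ext_loc with (f := fun t => (ln (N1 z t) - ln (N2 z t)) / 2).
  { eapply filter_imp; [|apply (tz_open z t H)]. intros s Hs. simpl. rewrite l1_expl; auto. }
  unfold N1, N2 in *. unfold Lp1, Dd, N1, N2.
  auto_derive. split; [lra|split; [lra|auto]].
  field. split; lra.
Qed.

Lemma l2_deriv z t : Cmod (tz z t) < 1 -> is_derive (l2 z) t (Lp2 z t).
Proof.
  intros H. destruct (pos_facts z t H) as [H1 [H2 H3]].
  apply is_derive_ext_loc with (f := fun t => atan (2 * t * snd z / Dd z t)).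
  { eapply filter_imp; [|apply (tz_open z t H)]. intros s Hs. simpl. rewrite l2_expl; auto. }
  unfold N1, N2, Dd in *. unfold Lp2, Dd, N1, N2.
  auto_derive. intro Hc; nra.
  field. repeat split; intro Hc; nra.
Qed.

Lemma L_id z t : Cmod (tz z t) < 1 ->
  Cmult (Lp1 z t, Lp2 z t) (Cminus (RtoC 1) (Cmult (tz z t) (tz z t))) = Cmult (RtoC 2) z.
Proof.
  intros H. destruct (pos_facts z t H) as [H1 [H2 H3]].
  unfold Lp1, Lp2, N1, N2, Dd in *. unfold tz. apply C_ext; simpl; field; lra.
Qed.

Lemma deriv0_const (F : R -> R) : (forall t, 0 <= t <= 1 -> is_derive F t 0) -> F 1 = F 0.
Proof.
  intros H. destruct (MVT_gen F 0 1 (fun _ => 0)) as [c [_ Hc]].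
  - intros x Hx. rewrite Rmin_left, Rmax_right in Hx by lra. apply H; lra.
  - intros x Hx. rewrite Rmin_left, Rmax_right in Hx by lra.
    apply continuity_pt_filterlim. apply (@ex_derive_continuous R_AbsRing R_NormedModule). exists 0. apply H; lra.
  - lra.
Qed.

Lemma ode_exp (a : R) (p1 p2 m1 m2 q1 q2 : R -> R) :
  (forall t, 0 <= t <= 1 -> is_derive p1 t (a * (p1 t * q1 t - p2 t * q2 t))) ->
  (forall t, 0 <= t <= 1 -> is_derive p2 t (a * (p1 t * q2 t + p2 t * q1 t))) ->
  (forall t, 0 <= t <= 1 -> is_derive m1 t (q1 t)) ->
  (forall t, 0 <= t <= 1 -> is_derive m2 t (q2 t)) ->
  p1 0 = 1 -> p2 0 = 0 -> m1 0 = 0 -> m2 0 = 0 ->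
  p1 1 = exp (a * m1 1) * cos (a * m2 1) /\ p2 1 = exp (a * m1 1) * sin (a * m2 1).
Proof.
  intros Hp1 Hp2 Hm1 Hm2 P1 P2 M1 M2.
  set (E1 := fun t => p1 t * (exp (- a * m1 t) * cos (a * m2 t)) - p2 t * (- (exp (- a * m1 t) * sin (a * m2 t)))).
  set (E2 := fun t => p1 t * (- (exp (- a * m1 t) * sin (a * m2 t))) + p2 t * (exp (- a * m1 t) * cos (a * m2 t))).
  assert (D1 : forall t, 0 <= t <= 1 -> is_derive E1 t 0).
  { intros t Ht. unfold E1. specialize (Hp1 t Ht). specialize (Hp2 t Ht).
    specialize (Hm1 t Ht). specialize (Hm2 t Ht).
    auto_derive. repeat split; eexists; eauto.
    replace (Derive (fun x => p1 x) t) with (a * (p1 t * q1 t - p2 t * q2 t)) by (symmetry; apply is_derive_unique; auto).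
    replace (Derive (fun x => p2 x) t) with (a * (p1 t * q2 t + p2 t * q1 t)) by (symmetry; apply is_derive_unique; auto).
    replace (Derive (fun x => m1 x) t) with (q1 t) by (symmetry; apply is_derive_unique; auto).
    replace (Derive (fun x => m2 x) t) with (q2 t) by (symmetry; apply is_derive_unique; auto).
    ring. }
  assert (D2 : forall t, 0 <= t <= 1 -> is_derive E2 t 0).
  { intros t Ht. unfold E2. specialize (Hp1 t Ht). specialize (Hp2 t Ht).
    specialize (Hm1 t Ht). specialize (Hm2 t Ht).
    auto_derive. repeat split; eexists; eauto.
    replace (Derive (fun x => p1 x) t) with (a * (p1 t * q1 t - p2 t * q2 t)) by (symmetry; apply is_derive_unique; auto).
    replace (Derive (fun x => p2 x) t) with (a * (p1 t * q2 t + p2 t * q1 t)) by (symmetry; apply is_derive_unique; auto).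
    replace (Derive (fun x => m1 x) t) with (q1 t) by (symmetry; apply is_derive_unique; auto).
    replace (Derive (fun x => m2 x) t) with (q2 t) by (symmetry; apply is_derive_unique; auto).
    ring. }
  apply deriv0_const in D1. apply deriv0_const in D2.
  unfold E1, E2 in D1, D2. rewrite P1, P2, M1, M2 in D1, D2.
  rewrite !Rmult_0_r, exp_0, cos_0, sin_0 in D1, D2.
  set (e := exp (- a * m1 1)) in *. set (co := cos (a * m2 1)) in *. set (si := sin (a * m2 1)) in *.
  assert (He : exp (a * m1 1) * e = 1).
  { unfold e. rewrite <- exp_plus. replace (a * m1 1 + - a * m1 1) with 0 by ring. apply exp_0. }
  assert (Hcs : si ^ 2 + co ^ 2 = 1) by (unfold si, co; rewrite <- !Rsqr_pow2; apply sin2_cos2).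
  assert (Ep : exp (a * m1 1) > 0) by apply exp_pos.
  ring_simplify in D1. ring_simplify in D2.
  split.
  -
    assert (p1 1 * e = co).
    { assert (X : p1 1 * e * (si ^ 2 + co ^ 2) = co * (p1 1 * e * co + e * p2 1 * si) - si * (- p1 1 * e * si + e * p2 1 * co)) by ring.
      rewrite D1, D2, Hcs in X. lra. }
    apply Rmult_eq_reg_r with e. rewrite H. rewrite Rmult_assoc, (Rmult_comm co), <- Rmult_assoc, He. ring.
    unfold e. apply Rgt_not_eq, exp_pos.
  - assert (p2 1 * e = si).
    { assert (X : p2 1 * e * (si ^ 2 + co ^ 2) = si * (p1 1 * e * co + e * p2 1 * si) + co * (- p1 1 * e * si + e * p2 1 * co)) by ring.
      rewrite D1, D2, Hcs in X. lra. }
    apply Rmult_eq_reg_r with e. rewrite H. rewrite Rmult_assoc, (Rmult_comm si), <- Rmult_assoc, He. ring.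
    unfold e. apply Rgt_not_eq, exp_pos.
Qed.

Lemma tz_plus0 z s : Cplus (RtoC 0) (Cmult (RtoC s) z) = tz z s.
Proof. unfold tz. apply C_ext; simpl; ring. Qed.

Lemma zQ a z t : Cmod (tz z t) < 1 ->
  Cmult z (PSC (dc (gC a)) (tz z t)) =
  Cmult (RtoC (/ 2)) (Cmult (Cplus (RtoC 1) (Cmult (RtoC (2 * a)) (PSC (gC a) (tz z t)))) (Lp1 z t, Lp2 z t)).
Proof.
  intros H. rewrite <- gam_ode by auto.
  set (Q := PSC (dc (gC a)) (tz z t)).
  set (A := Cminus (RtoC 1) (Cmult (tz z t) (tz z t))).
  transitivity (Cmult (Cmult (RtoC (/ 2)) (Cmult (Lp1 z t, Lp2 z t) A)) Q).
  - unfold A. rewrite L_id by auto. apply C_ext; simpl; field.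
  - ring.
Qed.

Lemma phi_der a z t : Cmod (tz z t) < 1 ->
  is_derive (fun s => fst (PSC (gC a) (tz z s))) t
    (/ 2 * ((1 + 2 * a * fst (PSC (gC a) (tz z t))) * Lp1 z t - 2 * a * snd (PSC (gC a) (tz z t)) * Lp2 z t)) /\
  is_derive (fun s => snd (PSC (gC a) (tz z s))) t
    (/ 2 * ((1 + 2 * a * fst (PSC (gC a) (tz z t))) * Lp2 z t + 2 * a * snd (PSC (gC a) (tz z t)) * Lp1 z t)).
Proof.
  intros H.
  assert (Hd := PSC_derive (gC a) (tz z t) (good_gam a) H).
  assert (E : tz z t = Cplus (RtoC 0) (Cmult (RtoC t) z)) by (rewrite tz_plus0; auto).
  assert (H1 := CR_fst _ _ _ (RtoC 0) z t Hd E).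
  assert (H2 := CR_snd _ _ _ (RtoC 0) z t Hd E).
  rewrite zQ in H1, H2 by auto.
  split.
  - apply (is_derive_ext (fun s => fst (PSC (gC a) (Cplus (RtoC 0) (Cmult (RtoC s) z))))). intros s. rewrite tz_plus0. reflexivity.
    replace (/ 2 * ((1 + 2 * a * fst (PSC (gC a) (tz z t))) * Lp1 z t - 2 * a * snd (PSC (gC a) (tz z t)) * Lp2 z t))
      with (fst (Cmult (RtoC (/ 2)) (Cmult (Cplus (RtoC 1) (Cmult (RtoC (2 * a)) (PSC (gC a) (tz z t)))) (Lp1 z t, Lp2 z t)))).
    exact H1. simpl. ring.
  - apply (is_derive_ext (fun s => snd (PSC (gC a) (Cplus (RtoC 0) (Cmult (RtoC s) z))))). intros s. rewrite tz_plus0. reflexivity.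
    replace (/ 2 * ((1 + 2 * a * fst (PSC (gC a) (tz z t))) * Lp2 z t + 2 * a * snd (PSC (gC a) (tz z t)) * Lp1 z t))
      with (snd (Cmult (RtoC (/ 2)) (Cmult (Cplus (RtoC 1) (Cmult (RtoC (2 * a)) (PSC (gC a) (tz z t)))) (Lp1 z t, Lp2 z t)))).
    exact H2. simpl. ring.
Qed.

Lemma der_lin (f : R -> R) (t df c0 c1 : R) : is_derive f t df -> is_derive (fun s => c0 + c1 * f s) t (c1 * df).
Proof. intros H. auto_derive. repeat split; try (eexists; eauto). replace (Derive (fun x => f x) t) with df by (symmetry; apply is_derive_unique; auto). ring. Qed.

Lemma der_half (f g : R -> R) (t df dg : R) : is_derive f t df -> is_derive g t dg -> is_derive (fun s => f s - g s / 2) t (df - dg / 2).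
Proof. intros H1 H2. auto_derive. repeat split; try (eexists; eauto).
  replace (Derive (fun x => f x) t) with df by (symmetry; apply is_derive_unique; auto).
  replace (Derive (fun x => g x) t) with dg by (symmetry; apply is_derive_unique; auto). field. Qed.

Lemma kfun_PSC a z : Cmod z < 1 -> k_fun a z = PSC (gC a) z.
Proof.
  intros Hz.
  assert (Hin : forall t, 0 <= t <= 1 -> Cmod (tz z t) < 1).
  { intros t Ht. unfold tz. rewrite Cmod_mult, Cmod_R, Rabs_pos_eq by lra.
    assert (0 <= Cmod z) by apply Cmod_ge_0. nra. }
  assert (T0 : tz z 0 = RtoC 0) by (unfold tz; apply C_ext; simpl; ring).
  assert (T1 : tz z 1 = z) by (unfold tz; apply C_ext; simpl; ring).
  assert (P0 : PSC (gC a) (tz z 0) = RtoC 0) by (rewrite T0, PSC_0; [reflexivity | apply good_gam]).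
  set (f1 := fun s => fst (PSC (gC a) (tz z s))).
  set (f2 := fun s => snd (PSC (gC a) (tz z s))).
  assert (F10 : f1 0 = 0) by (unfold f1; rewrite P0; reflexivity).
  assert (F20 : f2 0 = 0) by (unfold f2; rewrite P0; reflexivity).
  assert (Ew : Cdiv (Cplus (RtoC 1) z) (Cminus (RtoC 1) z) = wt z 1) by (unfold wt; rewrite T1; reflexivity).
  assert (Hpz : PSC (gC a) z = (f1 1, f2 1)) by (unfold f1, f2; rewrite T1; destruct (PSC (gC a) z); reflexivity).
  rewrite Hpz. unfold k_fun. cbv zeta. rewrite Ew.
  destruct (Req_EM_T a 0) as [Ha|Ha].
  - subst a.
    assert (G1 : forall t, 0 <= t <= 1 -> is_derive (fun s => f1 s - l1 z s / 2) t 0).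
    { intros t Ht. replace 0 with ((/ 2 * ((1 + 2 * 0 * f1 t) * Lp1 z t - 2 * 0 * f2 t * Lp2 z t)) - Lp1 z t / 2) by field.
      apply der_half. apply (phi_der 0 z t (Hin t Ht)). apply l1_deriv, Hin, Ht. }
    assert (G2 : forall t, 0 <= t <= 1 -> is_derive (fun s => f2 s - l2 z s / 2) t 0).
    { intros t Ht. replace 0 with ((/ 2 * ((1 + 2 * 0 * f1 t) * Lp2 z t + 2 * 0 * f2 t * Lp1 z t)) - Lp2 z t / 2) by field.
      apply der_half. apply (phi_der 0 z t (Hin t Ht)). apply l2_deriv, Hin, Ht. }
    apply deriv0_const in G1. apply deriv0_const in G2.
    rewrite F10, l1_0 in G1. rewrite F20, l2_0 in G2.
    unfold Clog. fold (l1 z 1) (l2 z 1). apply C_ext; simpl; lra.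
  - assert (Hode := ode_exp a (fun s => 1 + 2 * a * f1 s) (fun s => 0 + 2 * a * f2 s) (l1 z) (l2 z) (Lp1 z) (Lp2 z)).
    destruct Hode as [O1 O2].
    + intros t Ht. replace (a * ((1 + 2 * a * f1 t) * Lp1 z t - (0 + 2 * a * f2 t) * Lp2 z t))
        with (2 * a * (/ 2 * ((1 + 2 * a * f1 t) * Lp1 z t - 2 * a * f2 t * Lp2 z t))) by field.
      apply der_lin. apply (phi_der a z t (Hin t Ht)).
    + intros t Ht. replace (a * ((1 + 2 * a * f1 t) * Lp2 z t + (0 + 2 * a * f2 t) * Lp1 z t))
        with (2 * a * (/ 2 * ((1 + 2 * a * f1 t) * Lp2 z t + 2 * a * f2 t * Lp1 z t))) by field.
      apply der_lin. apply (phi_der a z t (Hin t Ht)).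
    + intros t Ht. apply l1_deriv, Hin, Ht.
    + intros t Ht. apply l2_deriv, Hin, Ht.
    + rewrite F10. ring.
    + rewrite F20. ring.
    + apply l1_0.
    + apply l2_0.
    + unfold Cpowr, Clog, Cexp. fold (l1 z 1) (l2 z 1).
      apply C_ext; simpl; rewrite !Rmult_0_l, Rminus_0_r, Rplus_0_r, Rplus_0_r, <- O1, <- O2.
      * field. lra.
      * field. lra.
Qed.

Lemma lim0_bounded (u : nat -> R) : is_lim_seq u 0 -> exists M, forall n, Rabs (u n) <= M.
Proof.
  intros H. apply is_lim_seq_spec in H. destruct (H (mkposreal 1 Rlt_0_1)) as [N HN].
  set (s := fun n => Rabs (u n)).
  exists (1 + sum_f_R0 s N). intros n.
  assert (0 <= sum_f_R0 s N) by (apply cond_pos_sum; intros; apply Rabs_pos).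
  destruct (Compare_dec.le_lt_dec N n) as [Hle|Hlt].
  - specialize (HN n Hle). simpl in HN. rewrite Rminus_0_r in HN. lra.
  - assert (s n <= sum_f_R0 s N) by (apply term_le_sum; [intros; apply Rabs_pos | lia]). unfold s in *. lra.
Qed.

Lemma series_good (c : nat -> C) :
  (forall z, Cmod z < 1 -> exists l, @is_series C_AbsRing C_NormedModule (fun n => Cmult (c n) (Cpow z n)) l) ->
  good c.
Proof.
  intros H r Hr.
  destruct (H (RtoC r)) as [l Hl]. rewrite Cmod_R, Rabs_pos_eq; lra.
  apply is_series_C in Hl. destruct Hl as [H1 H2].
  destruct (lim0_bounded _ (ex_series_lim_0 _ (ex_intro _ _ H1))) as [M1 HM1].
  destruct (lim0_bounded _ (ex_series_lim_0 _ (ex_intro _ _ H2))) as [M2 HM2].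
  exists (sqrt 2 * (M1 + M2)). intros n.
  replace (Cmod (c n) * r ^ n) with (Cmod (Cmult (c n) (Cpow (RtoC r) n))).
  2: { rewrite Cmod_mult, Cmod_pow, Cmod_R, Rabs_pos_eq; lra. }
  eapply Rle_trans. apply Cmod_2Rmax. apply Rmult_le_compat_l. apply sqrt_pos.
  specialize (HM1 n). specialize (HM2 n).
  assert (0 <= Rabs (fst (Cmult (c n) (Cpow (RtoC r) n)))) by apply Rabs_pos.
  assert (0 <= Rabs (snd (Cmult (c n) (Cpow (RtoC r) n)))) by apply Rabs_pos.
  apply Rmax_lub; lra.
Qed.

Lemma gam2 a : gam a 2 = a.
Proof. simpl. field. Qed.
Lemma gam3 a : gam a 3 = (1 + 2 * a ^ 2) / 3.
Proof. simpl. field. Qed.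
Lemma gam4 a : gam a 4 = (a ^ 3 + 2 * a) / 3.
Proof. simpl. field. Qed.

Definition Qp (a lam : R) := lam ^ 2 + 2 * a * lam + 2 * a ^ 2 + 1.

Lemma class_coefs a lam h g ca cb : in_class a lam h g ca cb ->
  ca 2%nat = RtoC (a + lam / 2) /\
  ca 3%nat = RtoC (/ 3 * Qp a lam) /\
  ca 4%nat = RtoC (/ 3 * a ^ 3 + 2 / 3 * a + / 4 * lam * Qp a lam) /\
  cb 3%nat = RtoC (/ 3 * lam ^ 2 + 2 / 3 * a * lam) /\
  cb 4%nat = RtoC (/ 4 * lam * Qp a lam).
Proof.
  intros [Ha0 [Ha1 [Hb0 HC]]].
  assert (Ga : good ca) by (apply series_good; intros z Hz; destruct (HC z Hz) as [H1 _]; eauto).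
  assert (Gb : good cb) by (apply series_good; intros z Hz; destruct (HC z Hz) as [_ [H2 _]]; eauto).
  assert (Eh : forall z, Cmod z < 1 -> h z = PSC ca z).
  { intros z Hz. symmetry. apply PSC_eq; auto. apply (HC z Hz). }
  assert (Eg : forall z, Cmod z < 1 -> g z = PSC cb z).
  { intros z Hz. symmetry. apply PSC_eq; auto. apply (HC z Hz). }
  (* coefficient relation from h - g = k *)
  assert (R1 : forall n, ca n = Cplus (cb n) (gC a n)).
  { apply PSC_coef_eq; auto. apply good_plus; auto. apply good_gam.
    intros z Hz. rewrite PSC_plus; auto. 2: apply good_gam.
    rewrite <- kfun_PSC by auto. destruct (HC z Hz) as [_ [_ [Hk _]]].
    rewrite <- Hk, <- Eh, <- Eg by auto. apply C_ext; simpl; ring. }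
  assert (R2 : forall n, dc cb n = Cmult (RtoC lam) (incr1 (dc ca) n)).
  { apply PSC_coef_eq. apply good_dc; auto. apply good_scal, good_incr1, good_dc; auto.
    intros z Hz. rewrite PSC_scal, PSC_incr1; auto. 2: apply good_dc; auto. 2: apply good_incr1, good_dc; auto.
    destruct (HC z Hz) as [_ [_ [_ [dh [dg [Hdh [Hdg [Hnz Hq]]]]]]]].
    assert (r0 : 0 < 1 - Cmod z) by lra.
    assert (E1 : dh = PSC (dc ca) z).
    { apply (deriv_unique_loc h (PSC ca) z dh _ (1 - Cmod z) r0 Hdh (PSC_derive ca z Ga Hz)).
      intros y Hy. apply Eh. assert (Cmod y <= Cmod z + Cmod (Cminus y z)).
      { replace y with (Cplus z (Cminus y z)) at 1 by (apply C_ext; simpl; ring). apply Cmod_triangle. }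
      lra. }
    assert (E2 : dg = PSC (dc cb) z).
    { apply (deriv_unique_loc g (PSC cb) z dg _ (1 - Cmod z) r0 Hdg (PSC_derive cb z Gb Hz)).
      intros y Hy. apply Eg. assert (Cmod y <= Cmod z + Cmod (Cminus y z)).
      { replace y with (Cplus z (Cminus y z)) at 1 by (apply C_ext; simpl; ring). apply Cmod_triangle. }
      lra. }
    rewrite <- E1, <- E2.
    assert (dg = Cmult (Cdiv dg dh) dh) by (field; auto).
    rewrite H, Hq. ring. }
  assert (B1 : cb 1%nat = RtoC 0).
  { assert (X := R2 0%nat). unfold dc in X. simpl incr1 in X.
    apply C_ext; [apply (f_equal fst) in X | apply (f_equal snd) in X]; simpl in X; simpl; lra. }
  assert (A1 := Ha1).
  assert (B2 : cb 2%nat = RtoC (lam / 2)).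
  { assert (X := R2 1%nat). unfold dc in X. simpl incr1 in X. rewrite A1 in X.
    apply C_ext; [apply (f_equal fst) in X | apply (f_equal snd) in X]; simpl in X; simpl; lra. }
  assert (A2 : ca 2%nat = RtoC (a + lam / 2)).
  { rewrite R1, B2. unfold gC. rewrite gam2. apply C_ext; simpl; ring. }
  assert (B3 : cb 3%nat = RtoC (/ 3 * lam ^ 2 + 2 / 3 * a * lam)).
  { assert (X := R2 2%nat). unfold dc in X. change (incr1 (fun n : nat => Cmult (RtoC (INR (S n))) (ca (S n))) 2) with (Cmult (RtoC (INR 2)) (ca 2%nat)) in X.
    rewrite A2 in X.
    apply C_ext; [apply (f_equal fst) in X | apply (f_equal snd) in X]; simpl in X; simpl; nra. }
  assert (A3 : ca 3%nat = RtoC (/ 3 * Qp a lam)).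
  { rewrite R1, B3. unfold gC, Qp. rewrite gam3. apply C_ext; simpl; field. }
  assert (B4 : cb 4%nat = RtoC (/ 4 * lam * Qp a lam)).
  { assert (X := R2 3%nat). unfold dc in X. change (incr1 (fun n : nat => Cmult (RtoC (INR (S n))) (ca (S n))) 3) with (Cmult (RtoC (INR 3)) (ca 3%nat)) in X.
    rewrite A3 in X. unfold Qp in *.
    apply C_ext; [apply (f_equal fst) in X | apply (f_equal snd) in X]; simpl in X; simpl; nra. }
  assert (A4 : ca 4%nat = RtoC (/ 3 * a ^ 3 + 2 / 3 * a + / 4 * lam * Qp a lam)).
  { rewrite R1, B4. unfold gC. rewrite gam4. apply C_ext; simpl; field. }
  auto.
Qed.

Fixpoint alp (a lam : R) (n : nat) : R :=
  match n with
  | O => 0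
  | S m => gam a (S m) + lam * INR m * alp a lam m / INR (S m)
  end.

Definition aC a lam n := RtoC (alp a lam n).
Definition bC a lam n := RtoC (alp a lam n - gam a n).

Lemma good_alp a lam : 0 <= lam < 1 -> good (aC a lam).
Proof.
  intros Hl r Hr. destruct (good_gam a r Hr) as [M HM].
  assert (HM0 : 0 <= M) by (eapply Rle_trans; [|apply (HM 0%nat)]; apply Rmult_le_pos; [apply Cmod_ge_0|apply pow_le; lra]).
  assert (Hlr : 0 <= lam * r < 1) by nra.
  exists (M / (1 - lam * r)). intros n. unfold aC. rewrite Cmod_R.
  induction n.
  - simpl. rewrite Rabs_R0, Rmult_0_l. apply Rdiv_le_0_compat; lra.
  - change (alp a lam (S n)) with (gam a (S n) + lam * INR n * alp a lam n / INR (S n)). specialize (HM (S n)). unfold gC in HM. rewrite Cmod_R in HM.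
    set (g := gam a (S n)) in *. set (al := alp a lam n) in *.
    assert (Hn : 0 <= INR n / INR (S n) <= 1).
    { rewrite S_INR. assert (0 <= INR n) by apply pos_INR. split.
      apply Rdiv_le_0_compat; lra. apply Rmult_le_reg_r with (INR n + 1). lra.
      unfold Rdiv. rewrite Rmult_assoc, Rinv_l; lra. }
    replace (g + lam * INR n * al / INR (S n)) with (g + lam * (INR n / INR (S n)) * al)
      by (unfold Rdiv; ring).
    eapply Rle_trans. apply Rmult_le_compat_r. apply pow_le; lra. apply Rabs_triang.
    rewrite Rmult_plus_distr_r, !Rabs_mult, (Rabs_pos_eq lam), (Rabs_pos_eq (INR n / INR (S n))) by lra.
    assert (Hal := Rabs_pos al).
    assert (X : lam * (INR n / INR (S n)) * Rabs al * r ^ S n <= lam * r * (Rabs al * r ^ n)).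
    { assert (0 <= Rabs al * r ^ n) by (apply Rmult_le_pos; [auto|apply pow_le; lra]).
      assert (0 <= lam * r) by nra.
      replace (lam * (INR n / INR (S n)) * Rabs al * r ^ S n) with (lam * r * (Rabs al * r ^ n) * (INR n / INR (S n))) by (simpl; ring).
      apply Rle_trans with (lam * r * (Rabs al * r ^ n) * 1). 2: lra.
      apply Rmult_le_compat_l. apply Rmult_le_pos; auto. lra. }
    assert (Y : lam * r * (Rabs al * r ^ n) <= lam * r * (M / (1 - lam * r))) by (apply Rmult_le_compat_l; lra).
    assert (Z : M + lam * r * (M / (1 - lam * r)) = M / (1 - lam * r)) by (field; lra).
    lra.
Qed.

Lemma good_bC a lam : 0 <= lam < 1 -> good (bC a lam).
Proof.
  intros Hl. apply (good_ext (fun n => Cplus (aC a lam n) (Cmult (RtoC (-1)) (gC a n)))).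
  apply good_plus. apply good_alp; auto. apply good_scal, good_gam.
  intros n. unfold aC, bC, gC. apply C_ext; simpl; ring.
Qed.

Lemma Cexp_nz u : Cexp u <> RtoC 0.
Proof.
  unfold Cexp. intros E.
  assert (E1 := f_equal fst E). assert (E2 := f_equal snd E). simpl in E1, E2.
  assert (He := exp_pos (Re u)).
  assert (Hcs : sin (Im u) ^ 2 + cos (Im u) ^ 2 = 1) by (rewrite <- !Rsqr_pow2; apply sin2_cos2).
  assert (cos (Im u) = 0) by (apply Rmult_eq_reg_l with (exp (Re u)); lra).
  assert (sin (Im u) = 0) by (apply Rmult_eq_reg_l with (exp (Re u)); lra).
  nra.
Qed.

Lemma kfun_nonzero a z : Cplus (RtoC 1) (Cmult (RtoC (2 * a)) (k_fun a z)) <> RtoC 0.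
Proof.
  unfold k_fun. cbv zeta. destruct (Req_EM_T a 0) as [Ha|Ha].
  - subst a. intros E. apply (f_equal fst) in E. simpl in E. lra.
  - unfold Cpowr. set (W := Cexp _).
    assert (Hnz : RtoC (2 * a) <> RtoC 0) by (intros E; apply (f_equal fst) in E; simpl in E; lra).
    replace (Cplus (RtoC 1) (Cmult (RtoC (2 * a)) (Cmult (Cinv (RtoC (2 * a))) (Cminus W (RtoC 1))))) with W
      by (field; auto).
    apply Cexp_nz.
Qed.

Lemma construct_class a lam : 0 <= lam < 1 ->
  in_class a lam (PSC (aC a lam)) (PSC (bC a lam)) (aC a lam) (bC a lam).
Proof.
  intros Hl.
  assert (Ga := good_alp a lam Hl). assert (Gb := good_bC a lam Hl).
  assert (Gg := good_gam a).
  assert (Eab : forall n, aC a lam n = Cplus (bC a lam n) (gC a n)).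
  { intros n. unfold aC, bC, gC. apply C_ext; simpl; ring. }
  assert (Ed : forall n, dc (bC a lam) n = Cmult (RtoC lam) (incr1 (dc (aC a lam)) n)).
  { intros [|m].
    - unfold dc, bC. simpl. apply C_ext; simpl; field.
    - unfold dc, bC, aC. change (incr1 _ (S m)) with (Cmult (RtoC (INR (S m))) (RtoC (alp a lam (S m)))).
      change (alp a lam (S (S m))) with (gam a (S (S m)) + lam * INR (S m) * alp a lam (S m) / INR (S (S m))).
      assert (0 < INR (S (S m))) by (apply lt_0_INR; lia).
      apply C_ext; cbn [fst snd RtoC Cmult]; field; lra. }
  assert (Edg : forall n, Cplus (dc (aC a lam) n) (Cmult (RtoC (-1)) (dc (bC a lam) n)) = dc (gC a) n).
  { intros n. unfold dc, aC, bC, gC. apply C_ext; simpl; ring. }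
  split; [|split; [|split]].
  - unfold aC. reflexivity.
  - unfold aC. simpl. apply C_ext; simpl; field.
  - unfold bC. simpl. apply C_ext; simpl; ring.
  - intros z Hz. split; [|split; [|split]].
    + apply PSC_correct; auto.
    + apply PSC_correct; auto.
    + rewrite kfun_PSC by auto. rewrite (PSC_ext _ _ z Eab), PSC_plus by auto.
      apply C_ext; simpl; ring.
    + exists (PSC (dc (aC a lam)) z), (PSC (dc (bC a lam)) z).
      assert (Hdg : PSC (dc (bC a lam)) z = Cmult (RtoC lam) (Cmult z (PSC (dc (aC a lam)) z))).
      { rewrite (PSC_ext _ _ z Ed), PSC_scal, PSC_incr1; auto. apply good_dc; auto.
        apply good_incr1, good_dc; auto. }
      split; [|split; [|split]].
      * apply PSC_derive; auto.
      * apply PSC_derive; auto.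
      * intros E0.
        assert (Hg0 : PSC (dc (gC a)) z = RtoC 0).
        { rewrite <- (PSC_ext _ _ z Edg), PSC_plus, PSC_scal, Hdg, E0; auto.
          apply C_ext; simpl; ring. apply good_dc; auto. apply good_dc; auto.
          apply good_scal, good_dc; auto. }
        assert (X := gam_ode a z Hz). rewrite Hg0, <- kfun_PSC in X by auto.
        apply (kfun_nonzero a z). rewrite <- X. apply C_ext; simpl; ring.
      * rewrite Hdg. field. auto.
        intros E0.
        assert (Hg0 : PSC (dc (gC a)) z = RtoC 0).
        { rewrite <- (PSC_ext _ _ z Edg), PSC_plus, PSC_scal, Hdg, E0; auto.
          apply C_ext; simpl; ring. apply good_dc; auto. apply good_dc; auto.
          apply good_scal, good_dc; auto. }
        assert (X := gam_ode a z Hz). rewrite Hg0, <- kfun_PSC in X by auto.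
        apply (kfun_nonzero a z). rewrite <- X. apply C_ext; simpl; ring.
Qed.

Lemma abs_bounds x : - Rabs x <= x <= Rabs x.
Proof. unfold Rabs; destruct (Rcase_abs x); lra. Qed.

Theorem theorem2p4 :
  forall (a lam : R), 0 <= lam < 1 ->
  (* the five coefficient bounds *)
  (forall (h g : C -> C) (ca cb : nat -> C),
     in_class a lam h g ca cb ->
     Cmod (ca 2%nat) <= Rabs a + lam / 2 /\
     Cmod (ca 3%nat) <= / 3 * Q a lam /\
     Cmod (ca 4%nat) <= / 3 * Rabs a ^ 3 + 2 / 3 * Rabs a + / 4 * lam * Q a lam /\
     Cmod (cb 3%nat) <= / 3 * lam ^ 2 + 2 / 3 * Rabs a * lam /\
     Cmod (cb 4%nat) <= / 4 * lam * Q a lam) /\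
  (* sharpness: for the same lambda and |a|, the bounds are attained *)
  (exists (a' : R) (h g : C -> C) (ca cb : nat -> C),
     Rabs a' = Rabs a /\ in_class a' lam h g ca cb /\
     Cmod (ca 2%nat) = Rabs a + lam / 2 /\
     Cmod (ca 3%nat) = / 3 * Q a lam /\
     Cmod (ca 4%nat) = / 3 * Rabs a ^ 3 + 2 / 3 * Rabs a + / 4 * lam * Q a lam /\
     Cmod (cb 3%nat) = / 3 * lam ^ 2 + 2 / 3 * Rabs a * lam /\
     Cmod (cb 4%nat) = / 4 * lam * Q a lam).
Proof.
  intros a lam Hl.
  assert (Hab := Rabs_pos a).
  assert (Hle := abs_bounds a).
  assert (Hsq : Rabs a ^ 2 = a ^ 2) by (apply pow2_abs).
  assert (HQp : 0 < Qp a lam) by (unfold Qp; nra).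
  assert (HQQ : Qp a lam <= Q a lam) by (unfold Qp, Q; nra).
  assert (HQ' : Qp (Rabs a) lam = Q a lam) by (unfold Qp, Q; rewrite Hsq; ring).
  split.
  - intros h g ca cb Hc.
    destruct (class_coefs a lam h g ca cb Hc) as [A2 [A3 [A4 [B3 B4]]]].
    rewrite A2, A3, A4, B3, B4, !Cmod_R.
    assert (Ha3 : Rabs (a ^ 3) = Rabs a ^ 3) by (symmetry; apply RPow_abs).
    assert (Hc3 : - Rabs a ^ 3 <= a ^ 3 <= Rabs a ^ 3).
    { rewrite <- Ha3. apply abs_bounds. }
    assert (HlQ : 0 <= lam * Qp a lam <= lam * Q a lam) by (split; [apply Rmult_le_pos|apply Rmult_le_compat_l]; lra).
    assert (Hal : - (Rabs a * lam) <= a * lam <= Rabs a * lam) by (split; nra).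
    assert (0 <= lam ^ 2) by nra.
    repeat split; apply Rabs_le; split; lra.
  - exists (Rabs a), (PSC (aC (Rabs a) lam)), (PSC (bC (Rabs a) lam)), (aC (Rabs a) lam), (bC (Rabs a) lam).
    assert (Hc := construct_class (Rabs a) lam Hl).
    destruct (class_coefs _ _ _ _ _ _ Hc) as [A2 [A3 [A4 [B3 B4]]]].
    rewrite A2, A3, A4, B3, B4, !Cmod_R, HQ'.
    assert (0 <= Q a lam) by (rewrite <- HQ'; unfold Qp; nra).
    assert (0 <= Rabs a ^ 3) by (apply pow_le; auto).
    assert (0 <= lam * Q a lam) by (apply Rmult_le_pos; lra).
    assert (0 <= Rabs a * lam) by nra.
    assert (0 <= lam ^ 2) by nra.
    split. apply Rabs_Rabsolu. split. auto.
    repeat split; apply Rabs_pos_eq; lra.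
Qed.
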